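(* Let $n\ge0$ and let $A,B$ be induced subgraphs of a graph $G$ such that $A\cup B=G$ and such that for any two vertices $v,w$ of $G$ with $v\notin A$ and $w\notin B$, the distance from $v$ to $w$ is at least $n+1$. Then the square of inclusions \[\begin{array}{ccc} A\cap B&\hookrightarrow&A\\ \downarrow&&\downarrow\\ B&\hookrightarrow&G\end{array}\] is an $n$-skeletal pushout.
   Context: A graph is a set with a reflexive symmetric relation (edges); graph maps preserve the relation. An induced subgraph is a subset of vertices with all edges of $G$ between them. The distance between vertices is the length of a shortest path ($\infty$ if none). The box product $G\square H$ has vertex set $V(G)\times V(H)$ and $(v,w)\sim(v',w')$ iff ($v=v'$, $w\sim w'$) or ($v\sim v'$, $w=w'$); $I_1$ is a single edge. The $1$-nerve $N_1G$ is the cubical set (presheaf on the box category with faces, degeneracies and connections) whose $k$-cubes are graph maps $I_1^{\square k}\to G$. $\operatorname{sk}^n$ of a cubical set is the subobject generated by cubes of dimension $\le n$. A commutative square of graphs is an $n$-skeletal pushout if applying $\operatorname{sk}^n\circ N_1$ yields a pushout square of cubical sets. *)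

(* Defs.v *)
From HB Require Import structures.
From mathcomp Require Import all_boot.
From mathcomp Require Import zify.
From Stdlib Require Import FunctionalExtensionality ProofIrrelevance.

Set Implicit Arguments.
Unset Strict Implicit.
Unset Printing Implicit Defensive.

Record graph := Graph {
  vert :> Type;
  adj : vert -> vert -> Prop;
  adj_refl : forall v, adj v v;
  adj_sym : forall v w, adj v w -> adj w v }.

Record gmap (G H : graph) := GMap {
  gfun :> G -> H;
  gfun_adj : forall v w, adj v w -> adj (gfun v) (gfun w) }.

Definition gcomp (G H K : graph) (f : gmap G H) (g : gmap H K) : gmap G K :=
  @GMap G K (fun v => g (f v)) (fun v w e => gfun_adj g (gfun_adj f e)).

Lemma gmap_eq (G H : graph) (f g : gmap G H) : (forall v, f v = g v) -> f = g.
Proof.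
case: f => f hf; case: g => g hg /= e.
have E : f = g by apply: functional_extensionality.
subst g; f_equal; apply: proof_irrelevance.
Qed.

Definition induced (G : graph) (P : G -> Prop) : graph :=
  @Graph {v : G | P v} (fun x y => adj (proj1_sig x) (proj1_sig y))
    (fun x => adj_refl (proj1_sig x)) (fun x y e => adj_sym e).

Definition incl_sub (G : graph) (P Q : G -> Prop) (h : forall v, P v -> Q v) :
  gmap (induced P) (induced Q) :=
  @GMap (induced P) (induced Q)
    (fun x => exist Q (proj1_sig x) (h _ (proj2_sig x))) (fun x y e => e).

Definition incl_top (G : graph) (P : G -> Prop) : gmap (induced P) G :=
  @GMap (induced P) G (fun x => proj1_sig x) (fun x y e => e).

(* walks of length k from v to w; the distance from v to w is the least
   such k (infinity if none), so "dist v w >= d" means every walk has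
   length >= d. *)
Inductive walk (G : graph) (v : G) : G -> nat -> Prop :=
| walk0 : walk v v 0
| walkS : forall u w k, walk v u k -> adj u w -> walk v w k.+1.

Definition dist_ge (G : graph) (v w : G) (d : nat) : Prop :=
  forall k, walk v w k -> d <= k.

(* The cube graphs I_1^{box k}: vertices {0,1}^k, two vertices adjacent
   iff they differ in at most one coordinate (this is the unfolding of
   the iterated box product of the edge I_1).                           *)
Definition cvert (k : nat) := 'I_k -> bool.

Definition cadj k (x y : cvert k) : Prop :=
  forall j1 j2, x j1 <> y j1 -> x j2 <> y j2 -> j1 = j2.

Lemma cadj_refl k (x : cvert k) : cadj x x.
Proof. by move=> j1 j2 []. Qed.

Lemma cadj_sym k (x y : cvert k) : cadj x y -> cadj y x.
Proof. by move=> h j1 j2 e1 e2; apply: h => e; [apply: e1|apply: e2]. Qed.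

Definition cube k : graph := @Graph (cvert k) (@cadj k) (@cadj_refl k) (@cadj_sym k).

(* The box category with connections: objects [1]^k, morphisms the maps
   {0,1}^m -> {0,1}^n generated under composition by faces,
   degeneracies and (both kinds of) connections.                        *)

Definition face k (i : 'I_k.+1) (e : bool) (x : cvert k) : cvert k.+1 :=
  fun j => match unlift i j with Some j' => x j' | None => e end.

Definition degen k (i : 'I_k.+1) (x : cvert k.+1) : cvert k :=
  fun j => x (lift i j).

Definition conn k (i : 'I_k.+1) (e : bool) (x : cvert k.+2) : cvert k.+1 :=
  fun j => if (j < i)%N then x (inord j)
           else if (j == i :> nat) then
             (if e then x (inord i) && x (inord i.+1)
              else x (inord i) || x (inord i.+1))
           else x (inord j.+1).

Inductive isbox : forall m n, (cvert m -> cvert n) -> Prop :=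
| box_id n : @isbox n n (fun x => x)
| box_face k (i : 'I_k.+1) (e : bool) : isbox (face i e)
| box_degen k (i : 'I_k.+1) : isbox (degen i)
| box_conn k (i : 'I_k.+1) (e : bool) : isbox (conn i e)
| box_comp l m n (f : cvert l -> cvert m) (g : cvert m -> cvert n) :
    isbox f -> isbox g -> isbox (fun x => g (f x)).

Record boxmap m n := BoxMap {
  bfun :> cvert m -> cvert n;
  bfun_box : isbox bfun }.

Definition bid n : boxmap n n := BoxMap (box_id n).
Definition bcomp l m n (f : boxmap l m) (g : boxmap m n) : boxmap l n :=
  BoxMap (box_comp (bfun_box f) (bfun_box g)).

Lemma cadj_by m n (f : cvert m -> cvert n) (pre : 'I_m -> option 'I_n) :
  (forall x y j, f x j <> f y j -> exists c, x c <> y c /\ pre c = Some j) ->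
  forall x y, cadj x y -> cadj (f x) (f y).
Proof.
move=> H x y hxy j1 j2 d1 d2.
case: (H _ _ _ d1) => c1 [e1 p1]; case: (H _ _ _ d2) => c2 [e2 p2].
have E := hxy _ _ e1 e2; subst c2; congruence.
Qed.

Lemma conn_adj k (i : 'I_k.+1) e : forall x y, cadj x y -> cadj (conn i e x) (conn i e y).
Proof.
  apply: (@cadj_by _ _ _ (fun c : 'I_k.+2 =>
            Some (inord (if (c <= i)%N then c : nat else (c : nat).-1)))).
  move=> x y j; rewrite /conn.
  have Hj := ltn_ord j; have Hi := ltn_ord i.
  have iK : forall a, a < k.+2 -> ((inord a : 'I_k.+2) : nat) = a by move=> a; exact: inordK.
  have iK' : forall a, a < k.+1 -> ((inord a : 'I_k.+1) : nat) = a by move=> a; exact: inordK.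
  case: ltnP => hji.
    move=> d; exists (inord j); split=> //; congr Some; apply: ord_inj.
    rewrite iK; last lia.
    by rewrite ifT ?iK' //; lia.
  case: eqP => hji'.
    move=> d.
    case Ea : (x (inord i) == y (inord i)).
      move/eqP: Ea => Ea.
      exists (inord i.+1); split.
        by move=> Eb; apply: d; rewrite Ea Eb.
      congr Some; apply: ord_inj; rewrite iK; last lia.
      by rewrite ifF ?iK' //; lia.
    exists (inord i); split; first by move/eqP: Ea.
    congr Some; apply: ord_inj; rewrite iK; last lia.
    by rewrite ifT ?iK' //; lia.
  move=> d; exists (inord j.+1); split=> //; congr Some; apply: ord_inj.
  rewrite iK; last lia.
  by rewrite ifF ?iK' //; lia.
Qed.

Lemma isbox_adj m n (f : cvert m -> cvert n) :
  isbox f -> forall x y, cadj x y -> cadj (f x) (f y).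
Proof.
elim=> {m n f}.
- by [].
- move=> k i e; apply: (@cadj_by _ _ _ (fun c => Some (lift i c))).
  move=> x y j; rewrite /face; case: unliftP => [j' ->|->] d; last by [].
  by exists j'.
- move=> k i; apply: (@cadj_by _ _ _ (unlift i)).
  move=> x y j; rewrite /degen => d; exists (lift i j); split=> //.
  by rewrite liftK.
- move=> k i e; exact: conn_adj.
- move=> l m n f g _ hf _ hg x y h; exact: hg _ _ (hf _ _ h).
Qed.

Definition boxg m n (f : boxmap m n) : gmap (cube m) (cube n) :=
  @GMap (cube m) (cube n) f (isbox_adj (bfun_box f)).

Record cset := CSet {
  cell : nat -> Type;
  cact : forall m n, boxmap m n -> cell n -> cell m;
  cact_id : forall n x, cact (bid n) x = x;
  cact_comp : forall l m n (f : boxmap l m) (g : boxmap m n) x,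
      cact (bcomp f g) x = cact f (cact g x) }.

Unset Implicit Arguments.
Record cmap (X Y : cset) := CMap {
  cfun : forall n, cell X n -> cell Y n;
  cfun_nat : forall m n (f : boxmap m n) x,
      cfun m (@cact X m n f x) = @cact Y m n f (cfun n x) }.
Set Implicit Arguments.
Arguments cfun {X Y} c n x.
Arguments cfun_nat {X Y} c m n f x.

Definition is_pushout (C A B D : cset) (i : cmap C A) (j : cmap C B)
    (p : cmap A D) (q : cmap B D) : Prop :=
  (forall n x, cfun p n (cfun i n x) = cfun q n (cfun j n x)) /\
  forall (Z : cset) (f : cmap A Z) (g : cmap B Z),
    (forall n x, cfun f n (cfun i n x) = cfun g n (cfun j n x)) ->
    exists h : cmap D Z,
      [/\ (forall n x, cfun h n (cfun p n x) = cfun f n x),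
          (forall n x, cfun h n (cfun q n x) = cfun g n x) &
          forall h' : cmap D Z,
            (forall n x, cfun h' n (cfun p n x) = cfun f n x) ->
            (forall n x, cfun h' n (cfun q n x) = cfun g n x) ->
            forall n x, cfun h' n x = cfun h n x].

Definition nerve1 (G : graph) : cset.
refine (@CSet (fun k => gmap (cube k) G)
          (fun m n f c => gcomp (boxg f) c) _ _).
- by move=> n x; apply: gmap_eq.
- by move=> l m n f g x; apply: gmap_eq.
Defined.

Definition nmap (G H : graph) (h : gmap G H) : cmap (nerve1 G) (nerve1 H).
refine (@CMap (nerve1 G) (nerve1 H) (fun k c => gcomp c h) _).
by move=> m n f x; apply: gmap_eq.
Defined.

Lemma sig_eq (T : Type) (P : T -> Prop) (a b : {x : T | P x}) :
  proj1_sig a = proj1_sig b -> a = b.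
Proof.
case: a => a ha; case: b => b hb /= E; subst b; f_equal; apply: proof_irrelevance.
Qed.

Definition skgen (X : cset) (n k : nat) (c : cell X k) : Prop :=
  exists m (f : boxmap k m) (d : cell X m), m <= n /\ c = cact f d.

Lemma skgen_act (X : cset) n m k (g : boxmap m k) (c : cell X k) :
  skgen n c -> skgen n (cact g c).
Proof.
case=> l [f [d [hl ->]]]; exists l, (bcomp g f), d; split=> //.
by rewrite cact_comp.
Qed.

Definition sk (n : nat) (X : cset) : cset.
refine (@CSet (fun k => {c : cell X k | skgen n c})
          (fun m k g c => exist _ (cact g (proj1_sig c))
                                 (skgen_act g (proj2_sig c))) _ _).
- by move=> k c; apply: sig_eq; rewrite /= cact_id.
- by move=> l m k f g c; apply: sig_eq; rewrite /= cact_comp.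
Defined.

Lemma skgen_map (X Y : cset) (phi : cmap X Y) n k (c : cell X k) :
  skgen n c -> skgen n (cfun phi k c).
Proof.
case=> l [f [d [hl ->]]]; exists l, f, (cfun phi l d); split=> //.
by rewrite cfun_nat.
Qed.

Definition skmap (n : nat) (X Y : cset) (phi : cmap X Y) : cmap (sk n X) (sk n Y).
refine (@CMap (sk n X) (sk n Y)
          (fun k c => exist _ (cfun phi k (proj1_sig c))
                            (skgen_map phi (proj2_sig c))) _).
by move=> m k f c; apply: sig_eq; rewrite /= cfun_nat.
Defined.

Definition skN (n : nat) (G H : graph) (h : gmap G H) :
  cmap (sk n (nerve1 G)) (sk n (nerve1 H)) := skmap n (nmap h).

(* Main.v *)
Require Import Defs.
From mathcomp Require Import all_boot zify.
From Stdlib Require Import FunctionalExtensionality ProofIrrelevance Classical ClassicalEpsilon.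
Set Implicit Arguments. Unset Strict Implicit.

Definition memc m (J b : 'I_m -> bool) (x : cvert m) := forall j, J j -> x j = b j.

Lemma bool_conn (e J0 J1 b0 b1 x0 x1 : bool) :
  (J0 -> x0 = b0) -> (J1 -> x1 = b1) ->
  [|| J0 && J1, J0 && (b0 == ~~ e) | J1 && (b1 == ~~ e)] ->
  (if e then x0 && x1 else x0 || x1) =
  (if e then (if J0 then b0 else e) && (if J1 then b1 else e)
        else (if J0 then b0 else e) || (if J1 then b1 else e)).
Proof.
by case: e; case: J0; case: J1; case: b0; case: b1; case: x0; case: x1 => //=
  h0 h1; rewrite ?h0 ?h1.
Qed.

Lemma bool_conn2 (e J0 J1 b0 b1 y : bool) :
  ([|| J0 && J1, J0 && (b0 == ~~ e) | J1 && (b1 == ~~ e)] ->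
   y = (if e then (if J0 then b0 else e) && (if J1 then b1 else e)
        else (if J0 then b0 else e) || (if J1 then b1 else e))) ->
  (if e then (if J0 then b0 else y) && (if J1 then b1 else y)
   else (if J0 then b0 else y) || (if J1 then b1 else y)) = y.
Proof.
by case: e; case: J0; case: J1; case: b0; case: b1; case: y => //= h; rewrite h.
Qed.

Lemma box_subcube m n (g : cvert m -> cvert n) : isbox g -> forall J b,
  exists J' b', (forall x, memc J b x -> memc J' b' (g x)) /\
    (forall y, memc J' b' y -> exists x, memc J b x /\ g x = y).
Proof.
elim=> {m n g}.
- move=> n J b; exists J, b; split=> // y hy; by exists y.
- move=> k i e J b.
  exists (fun j => if unlift i j is Some j' then J j' else true).
  exists (fun j => if unlift i j is Some j' then b j' else e).
  split.
    move=> x hx j; rewrite /face; case: (unlift i j) => [j'|] //; exact: hx.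
  move=> y hy; exists (fun j => y (lift i j)); split.
    move=> j hj; have := hy (lift i j); rewrite liftK; by apply.
  apply: functional_extensionality => j; rewrite /face.
  case: unliftP => [j' ->|->] //.
  by have := hy i; rewrite unlift_none => ->.
- move=> k i J b.
  exists (fun j => J (lift i j)), (fun j => b (lift i j)); split.
    by move=> x hx j hj; rewrite /degen; apply: hx.
  move=> y hy; exists (fun j => if unlift i j is Some j' then y j' else b i).
  split.
    by move=> j; case: unliftP => [j' ->|->] // /hy.
  by apply: functional_extensionality => j; rewrite /degen liftK.
- move=> k i e J b.
  pose I0 : 'I_k.+2 := inord i. pose I1 : 'I_k.+2 := inord i.+1.
  exists (fun j : 'I_k.+1 => if (j < i)%N then J (inord j) else if (j == i :> nat) then
     [|| J I0 && J I1, J I0 && (b I0 == ~~ e) | J I1 && (b I1 == ~~ e)]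
     else J (inord j.+1)).
  exists (fun j : 'I_k.+1 => if (j < i)%N then b (inord j) else if (j == i :> nat) then
     (if e then (if J I0 then b I0 else e) && (if J I1 then b I1 else e)
        else (if J I0 then b I0 else e) || (if J I1 then b I1 else e))
     else b (inord j.+1)).
  have Hi := ltn_ord i.
  split.
    move=> x hx j; rewrite /conn.
    case: ltnP => h1; first exact: hx.
    case: eqP => h2; last exact: hx.
    by apply: bool_conn; apply: hx.
  move=> y hy.
  exists (fun t : 'I_k.+2 => if (t < i)%N then y (inord t) else if (t == i :> nat) then
     (if J I0 then b I0 else y i) else if (t == i.+1 :> nat) then
     (if J I1 then b I1 else y i) else y (inord t.-1)).
  split.
    move=> t ht.
    case: ltnP => h1.
      have := hy (inord t); rewrite inordK; last by have := ltn_ord t; lia.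
      by rewrite h1 inord_val; apply.
    case: eqP => h2.
      have E : I0 = t by apply: ord_inj; rewrite /I0 inordK; lia.
      by rewrite E ht.
    case: eqP => h3.
      have E : I1 = t by apply: ord_inj; rewrite /I1 inordK; lia.
      by rewrite E ht.
    have := hy (inord t.-1); rewrite inordK; last by have := ltn_ord t; lia.
    rewrite ifF; last by lia.
    rewrite ifF; last by lia.
    rewrite ifF; last by lia.
    rewrite ifF; last by lia. have E : t.-1.+1 = t by lia. by rewrite E inord_val; apply.
  apply: functional_extensionality => j; rewrite /conn.
  have Hj := ltn_ord j.
  case: ltnP => h1.
    by rewrite inordK ?h1 ?inord_val //; lia.
  case: eqP => h2.
    rewrite -/I0 -/I1.
    rewrite !inordK; try lia.
    have f1 : (i.+1 < i)%N = false by lia. have f2 : (i.+1 == i :> nat) = false by lia.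
    rewrite ltnn eqxx f1 f2 eqxx.

    have -> : j = i by apply: ord_inj.
    apply: bool_conn2 => hh; have := hy i; rewrite ltnn eqxx; by apply.
  rewrite inordK; last by lia.
  rewrite ifF; last by lia.
  rewrite ifF; last by lia.
  rewrite ifF; last by lia.
  by rewrite /= inord_val.
- move=> l m n f g _ hf _ hg J b.
  case: (hf J b) => J1 [b1 [f1 f2]]; case: (hg J1 b1) => J2 [b2 [g1 g2]].
  exists J2, b2; split; first by move=> x /f1 /g1.
  move=> y /g2 [z [/f2 [x [hx <-]] <-]]; by exists x.
Qed.

Lemma walk_cube m (x y : cube m) : walk x y m.
Proof.
pose z t : cube m := fun j : 'I_m => if (j < t)%N then y j else x j.
have H : forall t, walk x (z t) t.
  elim=> [|t IH].
    have -> : z 0 = x by apply: functional_extensionality => j.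
    exact: walk0.
  apply: walkS IH _ => j1 j2; rewrite /z.
  have E : forall j : 'I_m, (if (j < t)%N then y j else x j) <> (if (j < t.+1)%N then y j else x j) -> (j : nat) = t.
    move=> j; case: ifP => a; case: ifP => a' ne; try (exfalso; exact: ne erefl); lia.
  by move=> /E h1 /E h2; apply: ord_inj; rewrite h1 h2.
have -> : y = z m by apply: functional_extensionality => j; rewrite /z ltn_ord.
exact: H.
Qed.

Lemma walk_map (G H : graph) (h : gmap G H) (v w : G) k :
  walk v w k -> walk (h v) (h w) k.
Proof.
elim=> {w k}; first exact: walk0.
move=> u w k _ IH e; apply: walkS IH _; exact: gfun_adj.
Qed.

Lemma small_cube (n : nat) (G : graph) (A B : G -> Prop)
  (hcov : forall v : G, A v \/ B v)
  (hdist : forall v w : G, ~ A v -> ~ B w -> dist_ge v w n.+1)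
  m (d : gmap (cube m) G) : m <= n -> (forall y, A (d y)) \/ (forall y, B (d y)).
Proof.
move=> hm; case: (classic (forall y, A (d y))) => hA; first by left.
right; move=> y.
case: (not_all_ex_not _ _ hA) => y0 hy0.
case: (classic (B (d y))) => // hB.
have := hdist _ _ hy0 hB m (walk_map d (walk_cube y0 y)).
lia.
Qed.

Lemma retract k m (fb : boxmap k m) : exists rho : gmap (cube m) (cube m),
  (forall x, rho (fb x) = fb x) /\ (forall y, exists x, rho y = fb x).
Proof.
case: (box_subcube (bfun_box fb) (fun _ => false) (fun _ => false)) => J [b [h1 h2]].
have rad : forall x y : cube m, adj x y ->
    adj ((fun j => if J j then b j else x j) : cube m) (fun j => if J j then b j else y j).
  move=> x y hxy j1 j2 /=; case: (J j1) => // e1; case: (J j2) => // e2.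
  exact: hxy.
exists (GMap rad); split.
  move=> x /=; apply: functional_extensionality => j /=.
  case E : (J j) => //; by rewrite (h1 x _ j E).
move=> y; case: (h2 (fun j => if J j then b j else y j)).
  by move=> j /= ->.
by move=> x [_ E]; exists x; rewrite /= E.
Qed.

Lemma gen_in n (G : graph) (P : G -> Prop) k (c : cell (sk n (nerve1 G)) k) :
  (forall x, P (proj1_sig c x)) -> exists c', cfun (skN n (incl_top P)) k c' = c.
Proof.
case: c => c hc /= hP.
case: (hc) => m [fb [d [hm E]]].
case: (retract fb) => rho [r1 r2].
have Ec : forall x, c x = d (fb x) by move=> x; rewrite E.
have hd : forall y, P (d (rho y)).
  by move=> y; case: (r2 y) => x ->; rewrite -Ec.
pose dP : gmap (cube m) (induced P) :=
  @GMap (cube m) (induced P) (fun y => exist P (d (rho y)) (hd y))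
     (fun y1 y2 e => gfun_adj d (gfun_adj rho e)).
have sg : skgen (X := nerve1 (induced P)) n (gcomp (boxg fb) dP) by exists m, fb, dP.
exists (exist _ _ sg); apply: sig_eq => /=; apply: gmap_eq => x /=.
by rewrite r1 Ec.
Qed.

Lemma inj_top n (G : graph) (P : G -> Prop) k (a a' : cell (sk n (nerve1 (induced P))) k) :
  cfun (skN n (incl_top P)) k a = cfun (skN n (incl_top P)) k a' -> a = a'.
Proof.
case: a => a ha; case: a' => a' ha' E.
apply: sig_eq => /=; apply: gmap_eq => x; apply: sig_eq.
by have := f_equal (fun c => gfun (proj1_sig c) x) E.
Qed.

Lemma or_neg_r (P Q : Prop) : P \/ Q -> ~ P -> Q.
Proof. by case. Qed.

Theorem corollary2p8 (n : nat) (G : graph) (A B : G -> Prop)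
  (hcov : forall v : G, A v \/ B v)
  (hdist : forall v w : G, ~ A v -> ~ B w -> dist_ge v w n.+1) :
  is_pushout
    (skN n (incl_sub (fun (v : G) (h : A v /\ B v) => proj1 h)))
    (skN n (incl_sub (fun (v : G) (h : A v /\ B v) => proj2 h)))
    (skN n (incl_top A))
    (skN n (incl_top B)).
Proof.
split.
  by move=> k x; apply: sig_eq; apply: gmap_eq.
move=> Z f g hfg.
set p := skN n (incl_top A).
set q := skN n (incl_top B).
set i := skN n (incl_sub (fun (v : G) (h : A v /\ B v) => proj1 h)).
set j := skN n (incl_sub (fun (v : G) (h : A v /\ B v) => proj2 h)).
have cover : forall k (c : cell (sk n (nerve1 G)) k),
    (exists a, cfun p k a = c) \/ (exists b, cfun q k b = c).
  move=> k [c hc]; case: (hc) => m [fb [d [hm E]]].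
  case: (small_cube hcov hdist d hm) => H; [left|right]; apply: gen_in => x /=;
    rewrite E; apply: H.
have wd : forall k a b, cfun p k a = cfun q k b -> cfun f k a = cfun g k b.
  move=> k a b E.
  have hAB : forall x, (fun v => A v /\ B v) (proj1_sig (cfun p k a) x).
    move=> x; split; first exact: (proj2_sig (proj1_sig a x)).
    rewrite E; exact: (proj2_sig (proj1_sig b x)).
  case: (@gen_in n G (fun v => A v /\ B v) k (cfun p k a) hAB) => e he.
  have ea : cfun i k e = a.
    apply: inj_top; rewrite -he; apply: sig_eq; exact: gmap_eq.
  have eb : cfun j k e = b.
    apply: inj_top; rewrite -E -he; apply: sig_eq; exact: gmap_eq.
  by rewrite -ea -eb hfg.
pose hf k (c : cell (sk n (nerve1 G)) k) : cell Z k :=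
  match excluded_middle_informative (exists a, cfun p k a = c) with
  | left H => cfun f k (proj1_sig (constructive_indefinite_description _ H))
  | right H => cfun g k (proj1_sig (constructive_indefinite_description _
                   (or_neg_r (cover k c) H)))
  end.
have hP : forall k a, hf k (cfun p k a) = cfun f k a.
  move=> k a; rewrite /hf; case: excluded_middle_informative => H.
    by case: constructive_indefinite_description => a' /= /inj_top ->.
  by exfalso; apply: H; exists a.
have hQ : forall k b, hf k (cfun q k b) = cfun g k b.
  move=> k b; rewrite /hf; case: excluded_middle_informative => H.
    by case: constructive_indefinite_description => a' /= /wd.
  by case: constructive_indefinite_description => b' /= /inj_top ->.
have hnat : forall m k (fb : boxmap m k) c, hf m (cact fb c) = cact fb (hf k c).
  move=> m k fb c; case: (cover k c) => [[a <-]|[b <-]].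
    by rewrite -(cfun_nat p) !hP cfun_nat.
  by rewrite -(cfun_nat q) !hQ cfun_nat.
exists (@CMap _ _ hf hnat); split.
- by move=> k x /=; apply: hP.
- by move=> k x /=; apply: hQ.
- move=> h' h1 h2 k x /=; case: (cover k x) => [[a <-]|[b <-]].
    by rewrite h1 hP.
  by rewrite h2 hQ.
Qed.
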